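(* For all $x\ge 1$ (and $n\ge x$), the $(x,x)$ edge-addition process on $n$ vertices always results in an $(x,x)$ task-dependency graph.
   Context: A task-dependency graph is a finite directed acyclic graph (no loops, no multiple edges). A vertex is initial if it has in-degree $0$ and terminal if it has out-degree $0$ (an isolated vertex is both). An $(x,y)$ task-dependency graph has exactly $x$ initial and exactly $y$ terminal vertices. The $(x,y)$ edge-addition process on $n$ vertices: start with the empty graph on $\{1,\dots,n\}$ and repeatedly add, uniformly at random, an edge $(a,b)$ with $a<b$ not yet present; if an addition would cause fewer than $x$ initial vertices or fewer than $y$ terminal vertices, it is cancelled. The process halts if the graph after some edge addition is an $(x,y)$ task-dependency graph, or if no more edges can be added; the result is the final graph. *)

(* Defs.v *)
From mathcomp Require Import all_boot.
Set Implicit Arguments. Unset Strict Implicit. Unset Printing Implicit Defensive.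

(* A graph on vertex set {1..n} is encoded on 'I_n (vertex i <-> i+1) as a
   set of directed edges (a,b); the edge-addition process only ever adds edges
   with a < b, so the graphs are DAGs without loops or multiple edges. *)
Definition graph (n : nat) := {set 'I_n * 'I_n}.

Definition empty_graph (n : nat) : graph n := set0.

Definition initial_vertices n (G : graph n) : {set 'I_n} :=
  [set v | [forall u, (u, v) \notin G]].
Definition terminal_vertices n (G : graph n) : {set 'I_n} :=
  [set u | [forall v, (u, v) \notin G]].

Definition is_tdg (x y : nat) n (G : graph n) : Prop :=
  #|initial_vertices G| = x /\ #|terminal_vertices G| = y.

(* adding e to G is possible (a new edge (a,b), a<b) and not cancelled *)
Definition allowed (x y : nat) n (G : graph n) (e : 'I_n * 'I_n) : Prop :=
  [/\ (e.1 < e.2)%N, e \notin G,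
      (x <= #|initial_vertices (e |: G)|)%N &
      (y <= #|terminal_vertices (e |: G)|)%N].

(* [reach x y n k G]: some run of the (x,y) edge-addition process on n
   vertices, which has not halted yet, reaches G after k successful edge
   additions (cancelled additions leave the graph unchanged and are omitted). *)
Inductive reach (x y n : nat) : nat -> graph n -> Prop :=
| reach0 : reach x y 0 (empty_graph n)
| reachS k G e :
    reach x y k G ->
    ~ ((0 < k)%N /\ is_tdg x y G) ->   (* the process did not halt at G *)
    allowed x y G e ->
    reach x y k.+1 (e |: G).

Definition final_graph (x y n : nat) (G : graph n) : Prop :=
  exists k, reach x y k G /\
    (((0 < k)%N /\ is_tdg x y G) \/ (forall e, ~ allowed x y G e)).

(* Main.v *)
Require Import Defs.
From mathcomp Require Import all_boot.
From mathcomp Require Import zify.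

Lemma initU n (G : graph n) (e : 'I_n * 'I_n) :
  initial_vertices (e |: G) = initial_vertices G :\ e.2.
Proof.
case: e => a b /=.
apply/setP => v; rewrite !inE.
apply/forallP/andP.
- move=> H; split.
  + apply/eqP => Hv; have := H a; rewrite !inE Hv.
    by rewrite eqxx.
  + by apply/forallP => u; have := H u; rewrite !inE negb_or => /andP[].
- case=> Hv /forallP H u; rewrite !inE negb_or H andbT.
  apply: contra Hv => /eqP [_ ->]; by [].
Qed.

Lemma termU n (G : graph n) (e : 'I_n * 'I_n) :
  terminal_vertices (e |: G) = terminal_vertices G :\ e.1.
Proof.
case: e => a b /=.
apply/setP => v; rewrite !inE.
apply/forallP/andP.
- move=> H; split.
  + apply/eqP => Hv; have := H b; rewrite !inE Hv.
    by rewrite eqxx.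
  + by apply/forallP => u; have := H u; rewrite !inE negb_or => /andP[].
- case=> Hv /forallP H u; rewrite !inE negb_or H andbT.
  apply: contra Hv => /eqP [-> _]; by [].
Qed.

Lemma reach_inv x y n k (G : graph n) : (x <= n)%N -> (y <= n)%N -> reach x y k G ->
  [/\ forall e, e \in G -> (e.1 < e.2)%N,
      (x <= #|initial_vertices G|)%N & (y <= #|terminal_vertices G|)%N].
Proof.
move=> xn yn; elim=> [|k' G' e _ IH _ [H1 H2 H3 H4]].
- split.
  + by move=> e; rewrite /empty_graph inE.
  + suff -> : initial_vertices (empty_graph n) = setT by rewrite cardsT card_ord.
    by apply/setP => v; rewrite !inE; apply/forallP => u; rewrite inE.
  + suff -> : terminal_vertices (empty_graph n) = setT by rewrite cardsT card_ord.
    by apply/setP => v; rewrite !inE; apply/forallP => u; rewrite inE.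
split=> //.
move=> f; rewrite in_setU1 => /orP[/eqP -> //|].
by case: IH => H _ _; apply: H.
Qed.

Lemma I_le x n (G : graph n) : (1 <= x)%N ->
  (forall e, e \in G -> (e.1 < e.2)%N) -> (x <= #|terminal_vertices G|)%N ->
  (forall e, ~ allowed x x G e) -> (#|initial_vertices G| <= x)%N.
Proof.
move=> x1 HG HT Hno; rewrite leqNgt; apply/negP => hI.
have [i0 Hi0] : exists i0, i0 \in initial_vertices G.
  by apply/set0Pn; rewrite -card_gt0; lia.
case: (arg_maxnP (fun i : 'I_n => val i) Hi0) => b Hb Hmax.
have {}Hb : b \in initial_vertices G := Hb.
have {}Hmax : forall j, j \in initial_vertices G -> (val j <= val b)%N := Hmax.
have HbI := Hb; rewrite inE in HbI; move/forallP: HbI => HbI.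
have HIb := cardsD1 b (initial_vertices G); rewrite Hb /= in HIb.
have key : forall a : 'I_n, (a < b)%N -> (x <= #|terminal_vertices G :\ a|)%N -> False.
  move=> a ab Ha; apply: (Hno (a, b)); split => //=.
  - by rewrite initU /=; move: hI; rewrite HIb add1n ltnS.
  - by rewrite termU.
case: (boolP [exists a : 'I_n, (a < b)%N && (a \notin terminal_vertices G)]).
  case/existsP => a /andP[ab aT]; apply: (key a ab).
  by have := cardsD1 a (terminal_vertices G); rewrite (negbTE aT) add0n => <-.
move=> Hall.
have Hall' : forall a : 'I_n, (a < b)%N -> a \in terminal_vertices G.
  move=> a ab; apply/negPn; apply: contra Hall => aT; apply/existsP; exists a.
  by rewrite ab.
have n0 : (n.-1 < n)%N by have := ltn_ord b; lia.
set l : 'I_n := Ordinal n0.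
have lT : l \in terminal_vertices G.
  rewrite inE; apply/forallP => v; apply/negP => /HG /= lv.
  by have := ltn_ord v; rewrite /= in lv; lia.
set S := [set a : 'I_n | (a <= b)%N].
have IS : initial_vertices G \subset S by apply/subsetP => i /Hmax; rewrite inE.
have ST : l |: (S :\ b) \subset terminal_vertices G.
  apply/subsetP => i; rewrite in_setU1 in_setD1 [i \in S]inE => /orP[/eqP -> //|/andP[ib iS]].
  apply: Hall'; rewrite ltn_neqAle iS andbT.
  by apply: contra ib => /eqP E; apply/eqP; apply: val_inj.
have lS : l \notin S :\ b.
  rewrite !inE negb_and negbK; case: (boolP (l == b)) => //= lb.
  have : (val l != val b) := lb.
  rewrite -ltnNge /=; have := ltn_ord b; lia.
have cS := cardsD1 b S; rewrite (_ : b \in S) /= in cS; last by rewrite inE.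
have cU := cardsU1 l (S :\ b); rewrite lS /= in cU.
have c1 := subset_leq_card IS; have c2 := subset_leq_card ST.
have [c Hc] : exists c, c \in initial_vertices G :\ b.
  apply/set0Pn; rewrite -card_gt0; have := leq_ltn_trans x1 hI; by rewrite HIb add1n ltnS.
move: Hc; rewrite in_setD1 => /andP[cb cI].
apply: (key c).
  rewrite ltn_neqAle (Hmax _ cI) andbT.
  by apply: contra cb => /eqP E; apply/eqP; apply: val_inj.
rewrite cS -cU in c1; have cIT := leq_trans c1 c2.
have h1 := leq_trans hI cIT.
have h2 : (#|terminal_vertices G| <= 1 + #|terminal_vertices G :\ c|)%N.
  by rewrite (cardsD1 c (terminal_vertices G)) leq_add2r leq_b1.
by rewrite -ltnS; apply: leq_trans h1 h2.
Qed.

Lemma T_le x n (G : graph n) : (1 <= x)%N ->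
  (forall e, e \in G -> (e.1 < e.2)%N) -> (x <= #|initial_vertices G|)%N ->
  (forall e, ~ allowed x x G e) -> (#|terminal_vertices G| <= x)%N.
Proof.
move=> x1 HG HI Hno; rewrite leqNgt; apply/negP => hT.
have [i0 Hi0] : exists i0, i0 \in terminal_vertices G.
  by apply/set0Pn; rewrite -card_gt0; apply: leq_ltn_trans hT.
case: (arg_minnP (fun i : 'I_n => val i) Hi0) => d Hd Hmin.
have {}Hd : d \in terminal_vertices G := Hd.
have {}Hmin : forall j, j \in terminal_vertices G -> (val d <= val j)%N := Hmin.
have HdT := Hd; rewrite inE in HdT; move/forallP: HdT => HdT.
have HTd := cardsD1 d (terminal_vertices G); rewrite Hd /= in HTd.
have key : forall b : 'I_n, (d < b)%N -> (x <= #|initial_vertices G :\ b|)%N -> False.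
  move=> b db Hb; apply: (Hno (d, b)); split => //=.
  - by rewrite initU.
  - by rewrite termU /=; move: hT; rewrite HTd add1n ltnS.
case: (boolP [exists b : 'I_n, (d < b)%N && (b \notin initial_vertices G)]).
  case/existsP => b /andP[db bI]; apply: (key b db).
  by have := cardsD1 b (initial_vertices G); rewrite (negbTE bI) add0n => <-.
move=> Hall.
have Hall' : forall b : 'I_n, (d < b)%N -> b \in initial_vertices G.
  move=> b db; apply/negPn; apply: contra Hall => bI; apply/existsP; exists b.
  by rewrite db.
have n0 : (0 < n)%N by have := ltn_ord d; lia.
set z : 'I_n := Ordinal n0.
have zI : z \in initial_vertices G.
  rewrite inE; apply/forallP => u; apply/negP => /HG /= uz.
  by rewrite /= in uz.
set S := [set a : 'I_n | (d <= a)%N].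
have TS : terminal_vertices G \subset S by apply/subsetP => i /Hmin; rewrite inE.
have SI : z |: (S :\ d) \subset initial_vertices G.
  apply/subsetP => i; rewrite in_setU1 in_setD1 [i \in S]inE => /orP[/eqP -> //|/andP[id iS]].
  apply: Hall'; rewrite ltn_neqAle iS andbT.
  by apply: contra id => /eqP E; apply/eqP; apply: val_inj.
have zS : z \notin S :\ d.
  rewrite !inE negb_and negbK; case: (boolP (z == d)) => //= zd.
  have : (val z != val d) := zd.
  rewrite -ltnNge /=; lia.
have cS := cardsD1 d S; rewrite (_ : d \in S) /= in cS; last by rewrite inE.
have cU := cardsU1 z (S :\ d); rewrite zS /= in cU.
have c1 := subset_leq_card TS; have c2 := subset_leq_card SI.
have [c Hc] : exists c, c \in terminal_vertices G :\ d.
  apply/set0Pn; rewrite -card_gt0.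
  have := leq_ltn_trans x1 hT; by rewrite HTd add1n ltnS.
move: Hc; rewrite in_setD1 => /andP[cd cT].
apply: (key c).
  rewrite ltn_neqAle (Hmin _ cT) andbT.
  by apply: contra cd => /eqP E; apply/eqP; apply: val_inj.
rewrite cS -cU in c1; have cTI := leq_trans c1 c2.
have h1 := leq_trans hT cTI.
have h2 : (#|initial_vertices G| <= 1 + #|initial_vertices G :\ c|)%N.
  by rewrite (cardsD1 c (initial_vertices G)) leq_add2r leq_b1.
by rewrite -ltnS; apply: leq_trans h1 h2.
Qed.

Theorem mainTheorem10 (x n : nat) :
  (1 <= x)%N -> (x <= n)%N ->
  forall G : graph n, final_graph x x G -> is_tdg x x G.
Proof.
move=> x1 xn G [k [Hr [[_ H] | Hno]]] //.
have [HG HI HT] := @reach_inv x x n k G xn xn Hr.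
split; apply/eqP; rewrite eqn_leq ?HI ?HT andbT.
- exact: I_le.
- exact: T_le.
Qed.
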